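(* The maximum matching size problem (on incremental graph streams) admits an extendable bitwise AND gadget with $v(d)=O(d^2)$ and $t(d)=O(d^2)$.
   Context: Let $\zeta\in\mathbb N$ be a fixed constant and $m=\zeta d$. An extendable bitwise AND gadget for a graph function $g$ (here $g(G)$ = maximum number of pairwise vertex-disjoint edges of $G$, a real-valued function) consists of positive increasing functions $v,t:\mathbb N\to\mathbb N$ and, for each $d$: an initial graph $H_{\mathrm{init}}=(V,E_0)$ with $|V|=v(d)$; edges $e_1,\dots,e_d\in\binom V2$, defining $H^1_x=H_{\mathrm{init}}\cup\{e_i: x_i=1\}$ for $x\in\{0,1\}^d$; and for every sequence of queries $q^1,\dots,q^m\in\{0,1\}^d$, edge sets $S^1,T^1,\dots,S^m,T^m$ and functions $\mathrm{dec}_j:\mathrm{Range}(g)\to\mathbb R$ (depending on the queries but not on $x$) such that: (a) each $\mathrm{dec}_j$ is $1$-Lipschitz; (b) with $Q^j_x=H^j_x\cup S^j$, $\mathrm{dec}_j(g(Q^j_x))-\mathrm{dec}_j(g(H^j_x))=\langle x,q^j\rangle$ for all $x$; (c) $H^{j+1}_x=Q^j_x\cup T^j$; and the total number of edge insertions $|E_0|+d+\sum_j(|S^j|+|T^j|)$ is at most $t(d)$. For real-valued $g$ one may take $\mathrm{dec}_j=\mathrm{id}$. *)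

(* Defs.v *)
From Stdlib Require Import Reals.
From mathcomp Require Import all_boot.

Set Implicit Arguments. Unset Strict Implicit. Unset Printing Implicit Defensive.

(* A graph on vertex set 'I_n is given by its edge set: a set of 2-element
   subsets of 'I_n.  Edge insertion = set union. *)
Definition is_edges (n : nat) (E : {set {set 'I_n}}) : Prop :=
  forall e, e \in E -> #|e| = 2.

Definition is_matching (n : nat) (E M : {set {set 'I_n}}) : bool :=
  (M \subset E) &&
  [forall e1 in M, forall e2 in M, (e1 != e2) ==> [disjoint e1 & e2]].

Definition max_matching (n : nat) (E : {set {set 'I_n}}) : nat :=
  \max_(M : {set {set 'I_n}} | is_matching E M) #|M|.

Definition inner (d : nat) (x q : {ffun 'I_d -> bool}) : nat :=
  \sum_(i < d) (x i && q i).

Definition H1 (n d : nat) (E0 : {set {set 'I_n}}) (e : 'I_d -> {set 'I_n})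
  (x : {ffun 'I_d -> bool}) : {set {set 'I_n}} :=
  E0 :|: [set e i | i : 'I_d & x i].

(* 0-based indexing: Hg j = H^{j+1}_x, Qg j = Q^{j+1}_x;
   Q^j_x = H^j_x ∪ S^j and H^{j+1}_x = Q^j_x ∪ T^j. *)
Fixpoint Hg (n d : nat) (E0 : {set {set 'I_n}}) (e : 'I_d -> {set 'I_n})
  (S T : nat -> {set {set 'I_n}}) (x : {ffun 'I_d -> bool}) (j : nat)
  : {set {set 'I_n}} :=
  match j with
  | 0 => H1 E0 e x
  | j'.+1 => (Hg E0 e S T x j' :|: S j') :|: T j'
  end.

Definition Qg (n d : nat) (E0 : {set {set 'I_n}}) (e : 'I_d -> {set 'I_n})
  (S T : nat -> {set {set 'I_n}}) (x : {ffun 'I_d -> bool}) (j : nat)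
  : {set {set 'I_n}} :=
  Hg E0 e S T x j :|: S j.

(* dec : Range(g) -> R is 1-Lipschitz (g is nat-valued; a 1-Lipschitz map on
   the range extends to a 1-Lipschitz map on nat). *)
Definition lipschitz1 (dec : nat -> R) : Prop :=
  forall a b : nat, Rle (Rabs (Rminus (dec a) (dec b))) (Rabs (Rminus (INR a) (INR b))).

(* Extendable bitwise AND gadget for g = max_matching, with parameter zeta
   (m = zeta * d queries) and size functions v, t. *)
Definition ext_AND_gadget (zeta : nat) (v t : nat -> nat) : Prop :=
  (forall d, 0 < v d) /\ (forall d, 0 < t d) /\
  (forall a b, a <= b -> v a <= v b) /\ (forall a b, a <= b -> t a <= t b) /\
  forall d : nat,
    exists (E0 : {set {set 'I_(v d)}}) (e : 'I_d -> {set 'I_(v d)}),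
      is_edges E0 /\ (forall i, #|e i| = 2) /\
      forall q : nat -> {ffun 'I_d -> bool},
        exists (S T : nat -> {set {set 'I_(v d)}}) (dec : nat -> nat -> R),
          (forall j, j < zeta * d -> is_edges (S j) /\ is_edges (T j)) /\
          (forall j, j < zeta * d -> lipschitz1 (dec j)) /\
          (forall j, j < zeta * d -> forall x : {ffun 'I_d -> bool},
              Rminus (dec j (max_matching (Qg E0 e S T x j)))
                     (dec j (max_matching (Hg E0 e S T x j)))
              = INR (inner x (q j))) /\
          #|E0| + d + \sum_(j < zeta * d) (#|S j| + #|T j|) <= t d.

(* Main.v *)
Require Import Defs.
From Stdlib Require Import Reals.
From mathcomp Require Import all_boot zify.
Set Implicit Arguments. Unset Strict Implicit. Unset Printing Implicit Defensive.

Definition Lab (z d : nat) : finType := ('I_d * bool * (bool * bool) * 'I_(z*d).+1)%type.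
Definition vsz (z d : nat) := (d * 2 * 4 * (z*d).+1).+1.

Lemma cardLab z d : #|Lab z d| = d * 2 * 4 * (z*d).+1.
Proof. by rewrite /Lab !card_prod !card_ord card_bool. Qed.

Lemma lab_proof z d (l : Lab z d) : (enum_rank l : nat) < vsz z d.
Proof. have h := ltn_ord (enum_rank l); have e := cardLab z d. rewrite /vsz -e; exact: ltnW. Qed.

Definition lab z d (l : Lab z d) : 'I_(vsz z d) := Ordinal (lab_proof l).

Lemma lab_inj z d : injective (@lab z d).
Proof. move=> l1 l2 /(congr1 val) /= h; apply: enum_rank_inj; exact: val_inj. Qed.

Lemma mm_cover n (E : {set {set 'I_n}}) (C : {set 'I_n}) (pi : 'I_n -> 'I_n) :
  (forall e, e \in E -> exists2 c, c \in C & c \in e) ->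
  (forall c, c \in C -> [set c; pi c] \in E) ->
  (forall c, c \in C -> pi c \notin C) ->
  {in C &, injective pi} ->
  max_matching E = #|C|.
Proof.
move=> cov edg out inj; apply/eqP; rewrite eqn_leq; apply/andP; split.
- apply/bigmax_leqP => M /andP[/subsetP sME /forallP dis].
  case: (set_0Vmem M) => [->|[e0 e0M]]; first by rewrite cards0.
  have [c0 _ _] := cov _ (sME _ e0M).
  pose f e := odflt c0 [pick c in C :&: e].
  have fP e : e \in M -> f e \in C :&: e.
    move=> eM; rewrite /f; case: pickP => [c //|none].
    have [c cC ce] := cov _ (sME _ eM). by have := none c; rewrite inE cC ce.
  rewrite -(card_in_imset (f:=f)).
  + apply: subset_leq_card; apply/subsetP => c /imsetP[e eM ->].
    by have := fP e eM; rewrite inE => /andP[].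
  + move=> e1 e2 e1M e2M feq; apply/eqP; apply: contraT => ne.
    have := dis e1; rewrite e1M /= => /forallP /(_ e2); rewrite e2M ne /= => dj.
    have := fP e1 e1M; rewrite inE => /andP[_ h1].
    have := fP e2 e2M; rewrite inE -feq => /andP[_ h2].
    by rewrite (disjointFr dj h1) in h2.
- pose M := [set [set c; pi c] | c in C].
  have -> : #|C| = #|M|.
    rewrite card_in_imset // => c1 c2 c1C c2C eq.
    have: c1 \in [set c2; pi c2] by rewrite -eq set21.
    rewrite !inE => /orP[/eqP //| /eqP e].
    by move: (out _ c2C); rewrite -e c1C.
  apply: leq_bigmax_cond; rewrite /is_matching; apply/andP; split.
  + apply/subsetP => e /imsetP[c cC ->]; exact: edg.
  + apply/forallP => e1; apply/implyP => /imsetP[c1 c1C ->].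
    apply/forallP => e2; apply/implyP => /imsetP[c2 c2C ->]; apply/implyP => ne.
    have c12 : c1 != c2 by apply: contraNneq ne => ->.
    rewrite -setI_eq0; apply/eqP/setP => z; rewrite !inE.
    apply/negbTE/negP => /andP[/orP[]/eqP -> /orP[]/eqP].
    * by move=> e; rewrite e eqxx in c12.
    * by move=> e; move: (out _ c2C); rewrite -e c1C.
    * by move=> e; move: (out _ c1C); rewrite e c2C.
    * by move/(inj _ _ c1C c2C) => e; rewrite e eqxx in c12.
Qed.

Definition hub z d (i : 'I_d) s : 'I_(vsz z d) := @lab z d (i, s, (false,false), ord0).
Definition pend z d (i : 'I_d) s (t : 'I_(z*d).+1) : 'I_(vsz z d) := @lab z d (i, s, (true,false), t).
Definition far z d (i : 'I_d) s (t : 'I_(z*d).+1) : 'I_(vsz z d) := @lab z d (i, s, (true,true), t).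
Definition ed n (a b : 'I_n) : {set 'I_n} := [set a; b].

Definition E0 z d : {set {set 'I_(vsz z d)}} :=
  [set ed (hub z p.1 p.2) (pend p.1 p.2 ord0) | p : 'I_d * bool].
Definition eE z d (i : 'I_d) : {set 'I_(vsz z d)} := ed (hub z i false) (hub z i true).
Definition Sg z d (q : nat -> {ffun 'I_d -> bool}) j : {set {set 'I_(vsz z d)}} :=
  [set ed (pend p.1 p.2 (inord j)) (far p.1 p.2 (inord j)) | p in [set p : 'I_d * bool | q j p.1]].
Definition Tg z d (q : nat -> {ffun 'I_d -> bool}) j : {set {set 'I_(vsz z d)}} :=
  [set ed (pend p.1 p.2 (inord j)) (far p.1 p.2 (inord j)) | p in [set p : 'I_d * bool | ~~ q j p.1]]
  :|: [set ed (hub z p.1 p.2) (pend p.1 p.2 (inord j.+1)) | p : 'I_d * bool].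

Definition HH z d q x j := Hg (E0 z d) (@eE z d) (Sg z q) (Tg z q) x j.

Lemma val_inord n k : k <= n -> (@inord n k : nat) = k.
Proof. by move=> h; rewrite inordK. Qed.

Lemma Hg_fwd z d (q : nat -> {ffun 'I_d -> bool}) (x : {ffun 'I_d -> bool}) j e : j <= z * d -> e \in HH z q x j ->
  [\/ exists2 i, x i & e = eE z i,
      exists i s (t : 'I_(z*d).+1), t <= j /\ e = ed (hub z i s) (pend i s t)
    | exists i s (t : 'I_(z*d).+1), t < j /\ e = ed (pend i s t) (far i s t)].
Proof.
rewrite /HH; elim: j e => [|j IH] e hj /=.
- rewrite /H1 inE => /orP[/imsetP[p _ ->]|/imsetP[i]].
  + by apply: Or32; exists p.1, p.2, ord0.
  + by rewrite inE => xi ->; apply: Or31; exists i.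
- rewrite !inE => /orP[/orP[H|H]|H].
  + case: (IH e (ltnW hj) H) => [h|[i [s [t [h1 h2]]]]|[i [s [t [h1 h2]]]]].
    * by apply: Or31.
    * by apply: Or32; exists i, s, t; split=> //; apply: leq_trans h1 _.
    * by apply: Or33; exists i, s, t; split=> //; apply: ltn_trans h1 _.
  + move: H => /imsetP[p _ ->]; apply: Or33; exists p.1, p.2, (inord j).
    by rewrite val_inord // ltnW.
  + move: H => /orP[/imsetP[p _ ->]|/imsetP[p _ ->]].
    * apply: Or33; exists p.1, p.2, (inord j). by rewrite val_inord // ltnW.
    * apply: Or32; exists p.1, p.2, (inord j.+1). by rewrite val_inord.
Qed.

Lemma Hg_mono z d (q : nat -> {ffun 'I_d -> bool}) (x : {ffun 'I_d -> bool}) j k : j <= k -> HH z q x j \subset HH z q x k.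
Proof.
move=> /subnK <-; elim: (k - j) => [|n IH] //=.
apply: subset_trans IH _; rewrite /HH addSn /=.
by apply/subsetP => y yH; rewrite !inE yH.
Qed.

Lemma Hg_e z d (q : nat -> {ffun 'I_d -> bool}) (x : {ffun 'I_d -> bool}) j i : x i -> eE z i \in HH z q x j.
Proof.
move=> xi; apply: (subsetP (Hg_mono z q x (leq0n j))).
by rewrite /HH /= /H1 !inE; apply/orP; right; apply/imsetP; exists i; rewrite ?inE.
Qed.

Lemma Hg_hp z d (q : nat -> {ffun 'I_d -> bool}) (x : {ffun 'I_d -> bool}) j i s : j <= z * d ->
  ed (hub z i s) (pend i s (inord j)) \in HH z q x j.
Proof.
case: j => [|j] hj /=.
- have -> : (inord 0 : 'I_(z*d).+1) = ord0 by apply: val_inj; rewrite /= inordK.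
  rewrite /H1 !inE; apply/orP; left; apply/imsetP; by exists (i, s).
- rewrite !inE; apply/orP; right; apply/orP; right.
  by apply/imsetP; exists (i, s).
Qed.

Lemma Hg_pf0 z d (q : nat -> {ffun 'I_d -> bool}) (x : {ffun 'I_d -> bool}) k i s :
  ed (pend i s (inord k)) (far i s (inord k)) \in HH z q x k.+1.
Proof.
rewrite /HH /= !inE.
case qt: (q k i).
- apply/orP; left; apply/orP; right; apply/imsetP; exists (i, s) => //; by rewrite inE.
- apply/orP; right; apply/orP; left; apply/imsetP; exists (i, s) => //; by rewrite inE qt.
Qed.

Lemma Hg_pf z d (q : nat -> {ffun 'I_d -> bool}) (x : {ffun 'I_d -> bool}) j i s (t : 'I_(z*d).+1) : t < j ->
  ed (pend i s t) (far i s t) \in HH z q x j.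
Proof.
move=> tj; apply: (subsetP (Hg_mono z q x tj)).
by have := Hg_pf0 z q x t i s; rewrite inord_val.
Qed.

Definition piV z d (f : Lab z d -> Lab z d) (v : 'I_(vsz z d)) : 'I_(vsz z d) :=
  if [pick l | lab l == v] is Some l then lab (f l) else v.

Lemma piV_lab z d f (l : Lab z d) : piV f (lab l) = lab (f l).
Proof.
rewrite /piV; case: pickP => [l' /eqP /lab_inj -> //|h].
by have := h l; rewrite eqxx.
Qed.

Lemma mm_lab z d (E : {set {set 'I_(vsz z d)}}) (P : pred (Lab z d)) (f : Lab z d -> Lab z d) :
  (forall e, e \in E -> exists2 l, P l & lab l \in e) ->
  (forall l, P l -> ed (lab l) (lab (f l)) \in E) ->
  (forall l, P l -> ~~ P (f l)) ->
  {in P &, injective f} ->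
  max_matching E = \sum_(l : Lab z d) P l.
Proof.
move=> cov edg out inj.
rewrite (@mm_cover _ E (@lab z d @: [set l | P l]) (piV f)).
- rewrite (card_imset _ (@lab_inj z d)) cardsE -sum1_card big_mkcond /=; apply: eq_bigr => l _; rewrite unfold_in; by case: (P l).
- move=> e eE; have [l Pl le] := cov e eE; exists (lab l) => //.
  by apply: imset_f; rewrite inE.
- move=> c /imsetP[l]; rewrite inE => Pl ->; rewrite piV_lab; exact: edg.
- move=> c /imsetP[l]; rewrite inE => Pl ->; rewrite piV_lab mem_imset ?inE ?out //.
  exact: lab_inj.
- move=> c1 c2 /imsetP[l1]; rewrite inE => P1 -> /imsetP[l2]; rewrite inE => P2 ->.
  rewrite !piV_lab => /lab_inj /(inj _ _ P1 P2) ->. by [].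
Qed.

Definition inCH z d j (l : Lab z d) : bool :=
  let: (i, s, (k1, k2), t) := l in
  if k1 then ~~ k2 && (t < j) else ~~ k2 && (t < 1).
Definition piH z d j (l : Lab z d) : Lab z d :=
  let: (i, s, (k1, k2), t) := l in
  if k1 then (i, s, (true, true), t) else (i, s, (true, false), inord j).

Lemma ord0E n (t : 'I_n.+1) : t < 1 -> t = ord0.
Proof. by move=> h; apply: val_inj => /=; lia. Qed.

Lemma mmH z d (q : nat -> {ffun 'I_d -> bool}) (x : {ffun 'I_d -> bool}) j : j <= z * d ->
  max_matching (HH z q x j) = \sum_(l : Lab z d) inCH j l.
Proof.
move=> hj; apply: (mm_lab (f := @piH z d j)).
- move=> e /(Hg_fwd hj) [[i xi ->]|[i [s [t [h1 ->]]]]|[i [s [t [h1 ->]]]]].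
  + by exists (i, false, (false,false), ord0); rewrite // /eE /ed /hub set21.
  + by exists (i, s, (false,false), ord0); rewrite // /ed /hub set21.
  + by exists (i, s, (true,false), t); rewrite /= ?h1 // /ed /pend set21.
- move=> [[[i s] [[|] [|]]] t] //=.
  + move=> h; exact: Hg_pf.
  + by move=> /ord0E ->; apply: Hg_hp.
- move=> [[[i s] [[|] [|]]] t] //=.
  by move=> _; rewrite val_inord // ltnn.
- move=> [[[i1 s1] [[|] [|]]] t1] [[[i2 s2] [[|] [|]]] t2]; rewrite !unfold_in //=.
  + by move=> _ _ [-> -> ->].
  + by move=> /ord0E -> /ord0E -> [-> ->].
Qed.

Definition inCQ z d (q : nat -> {ffun 'I_d -> bool}) (x : {ffun 'I_d -> bool}) j (l : Lab z d) : bool :=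
  let: (i, s, (k1, k2), t) := l in
  if k1 then ~~ k2 && (t < j + q j i)
  else ~~ k2 && (t < 1) && (if q j i then x i && ~~ s else true).
Definition piQ z d (q : nat -> {ffun 'I_d -> bool}) j (l : Lab z d) : Lab z d :=
  let: (i, s, (k1, k2), t) := l in
  if k1 then (i, s, (true, true), t)
  else if q j i then (i, true, (false, false), t) else (i, s, (true, false), inord j).

Lemma mmQ z d (q : nat -> {ffun 'I_d -> bool}) (x : {ffun 'I_d -> bool}) j : j <= z * d ->
  max_matching (Qg (E0 z d) (@eE z d) (Sg z q) (Tg z q) x j) = \sum_(l : Lab z d) inCQ q x j l.
Proof.
move=> hj; apply: (mm_lab (f := @piQ z d q j)).
- rewrite /Qg => e; rewrite inE => /orP[].
  move=> /(Hg_fwd hj) [[i xi ->]|[i [s [t [h1 ->]]]]|[i [s [t [h1 ->]]]]].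
  + exists (i, false, (false,false), ord0); last by rewrite /eE /ed /hub set21.
    by rewrite /= xi; case: (q j i).
  + case qi: (q j i).
    * exists (i, s, (true,false), t); last by rewrite /ed /pend set22.
      by rewrite /= qi addn1 ltnS h1.
    * exists (i, s, (false,false), ord0); last by rewrite /ed /hub set21.
      by rewrite /= qi.
  + exists (i, s, (true,false), t); last by rewrite /ed /pend set21.
    by rewrite /= ltn_addr.
  + move=> /imsetP[[i s]]; rewrite inE /= => qi ->.
    exists (i, s, (true,false), inord j); last by rewrite /ed /pend set21.
    by rewrite /= qi val_inord // addn1.
- move=> [[[i s] [[|] [|]]] t] //=.
  + move=> h; rewrite /Qg inE; case: (ltnP t j) => tj.
    * by rewrite Hg_pf.
    * have qi : q j i by move: h; case: (q j i) => //; rewrite addn0; lia.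
      have te : t = inord j by apply: val_inj; rewrite /= val_inord //; move: h; rewrite qi; lia.
      apply/orP; right; apply/imsetP; exists (i, s); by rewrite ?inE // te.
  + case qi: (q j i) => /=.
    * case: s; rewrite ?andbF // andbT => /andP[/ord0E -> xi].
      by rewrite /Qg inE Hg_e.
    * by rewrite andbT /Qg inE => /ord0E ->; rewrite Hg_hp.
- move=> [[[i s] [[|] [|]]] t] //=.
  rewrite /inCQ /=; case qi: (q j i) => /=; rewrite qi /=; first by rewrite !andbF.
  by move=> _; rewrite val_inord // addn0 ltnn.
- move=> [[[i1 s1] [[|] [|]]] t1] [[[i2 s2] [[|] [|]]] t2]; rewrite !unfold_in //=.
  + by move=> _ _ [-> -> ->].
  + by case: (q j i2).
  + by case: (q j i1).
  + case q1: (q j i1); case q2: (q j i2) => //=.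
    * by case: s1; case: s2; rewrite ?andbF // => /andP[/ord0E -> _] /andP[/ord0E -> _] [->].
    * by rewrite !andbT => /ord0E -> /ord0E -> [-> ->].
Qed.

Lemma sum_pair (I J : finType) (F : I * J -> nat) :
  \sum_(p : I * J) F p = \sum_(i : I) \sum_(j : J) F (i, j).
Proof. by rewrite pair_bigA; apply: eq_bigr => -[]. Qed.

Lemma sum_lab z d (F : Lab z d -> nat) :
  \sum_(l : Lab z d) F l =
  \sum_(i : 'I_d) \sum_(s : bool) \sum_(k1 : bool) \sum_(k2 : bool)
     \sum_(t < (z*d).+1) F (i, s, (k1, k2), t).
Proof.
rewrite sum_pair sum_pair sum_pair; apply: eq_bigr => i _; apply: eq_bigr => s _.
rewrite sum_pair; apply: eq_bigr => k1 _; by apply: eq_bigr.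
Qed.

Lemma sum_lt n c : \sum_(t < n) (t < c) = minn n c.
Proof.
elim: n => [|n IH]; first by rewrite big_ord0 min0n.
rewrite big_ord_recr /= IH; lia.
Qed.

Lemma sum_f n : \sum_(t < n) (false : nat) = 0.
Proof. by rewrite big1. Qed.

Lemma sum_ltT n c : \sum_(t < n) ((t < c) && true) = minn n c.
Proof. by rewrite -sum_lt; apply: eq_bigr => t _; rewrite andbT. Qed.

Lemma sum_ltF n c : \sum_(t < n) ((t < c) && false) = 0.
Proof. by rewrite big1 // => t _; rewrite andbF. Qed.

Lemma count_CQ z d (q : nat -> {ffun 'I_d -> bool}) (x : {ffun 'I_d -> bool}) j : j <= z * d ->
  \sum_(l : Lab z d) inCQ q x j l = \sum_(l : Lab z d) inCH j l + inner x (q j).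
Proof.
move=> hj; rewrite !sum_lab /inner -big_split /=; apply: eq_bigr => i _.
rewrite !big_bool /=.
case: (q j i); case: (x i); rewrite /= ?andbT ?andbF ?sum_f ?sum_ltT ?sum_ltF ?sum_lt; lia.
Qed.

Lemma ed_lab2 z d (l1 l2 : Lab z d) : l1 != l2 -> #|ed (lab l1) (lab l2)| = 2.
Proof. by rewrite /ed cards2 (inj_eq (@lab_inj z d)) => ->. Qed.

Definition tsz (z d : nat) := (6 * d * (z*d).+1).+1.

Theorem mainTheorem3 : forall zeta : nat,
  exists v t : nat -> nat,
    ext_AND_gadget zeta v t /\
    exists C N : nat, forall d, N <= d -> v d <= C * d ^ 2 /\ t d <= C * d ^ 2.
Proof.
move=> zeta; exists (vsz zeta), (tsz zeta); split; last first.
  exists (8 * zeta + 9), 1 => d hd; rewrite /vsz /tsz expnS expn1.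
  have E : d * 2 * 4 * (zeta*d).+1 = 8 * (zeta * (d * d)) + 8 * d.
    by rewrite mulnSr -!mulnA mulnCA; congr (_ + _); rewrite !mulnA; [lia| lia].
  have E' : 6 * d * (zeta*d).+1 = 6 * (zeta * (d * d)) + 6 * d.
    by nia.
  rewrite E E' mulnDl -mulnA.
  have h1 : d <= d * d by rewrite leq_pmulr.
  split; lia.
split; first by [].
split; first by [].
split.
  move=> a b hab; rewrite /vsz ltnS.
  apply: leq_mul; [apply: leq_mul; [apply: leq_mul|]|] => //; rewrite ltnS; exact: leq_mul.
split.
  move=> a b hab; rewrite /tsz ltnS.
  apply: leq_mul; [apply: leq_mul|] => //; rewrite ltnS; exact: leq_mul.
move=> d; exists (E0 zeta d), (@eE zeta d); split.
  move=> e /imsetP[p _ ->]; apply: ed_lab2; apply/eqP; by case.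
split.
  move=> i; apply: ed_lab2; apply/eqP; by case.
move=> q; exists (Sg zeta q), (Tg zeta q), (fun _ n => INR n); split.
  move=> j _; split.
  - move=> e /imsetP[p _ ->]; apply: ed_lab2; apply/eqP; by case.
  - move=> e; rewrite inE => /orP[] /imsetP[p _ ->]; apply: ed_lab2; apply/eqP; by case.
split.
  by move=> j _ a b; apply: Rle_refl.
split.
  move=> j hj x.
  have hQ := mmQ q x (ltnW hj).
  have hH := mmH q x (ltnW hj).
  rewrite /HH in hH; rewrite hQ hH count_CQ ?plus_INR; last exact: ltnW.
  ring.
have c2 : #|{: 'I_d * bool}| = d * 2 by rewrite card_prod card_ord card_bool.
have hE : #|E0 zeta d| <= d * 2 by rewrite -c2; apply: leq_imset_card.
have hS j : #|Sg zeta q j| <= d * 2.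
  by rewrite -c2; apply: leq_trans (leq_imset_card _ _) (max_card _).
have hT j : #|Tg zeta q j| <= d * 4.
  rewrite /Tg cardsU; apply: leq_trans (leq_subr _ _) _.
  apply: (@leq_trans (d*2 + d*2)); last lia.
  apply: leq_add; rewrite -c2;
    [apply: leq_trans (leq_imset_card _ _) (max_card _) | apply: leq_imset_card].
have hsum : \sum_(j < zeta * d) (#|Sg zeta q j| + #|Tg zeta q j|) <= zeta * d * (d * 6).
  apply: (@leq_trans (\sum_(j < zeta * d) (d * 6))).
    apply: leq_sum => j _; have := hS j; have := hT j; lia.
  by rewrite sum_nat_const card_ord.
rewrite /tsz; lia.
Qed.
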